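(* Let $d\ge2$ and let $P$ be a $d$-dimensional exceptional simplex. Then $\mu^F(P)=d-\tfrac12$.
   Context: For a $d$-dimensional rational polytope $P\subseteq\mathbb{R}^d$ and $a\in(\mathbb{Z}^d)^*$ let $h_P(a)=\min_{x\in P}\langle a,x\rangle$. For $s>0$ the Fine adjoint polytope is $P^{F(s)}=\{x\in\mathbb{R}^d : \langle a,x\rangle\ge h_P(a)+s \text{ for all } a\in(\mathbb{Z}^d)^*\setminus\{0\}\}$. The Fine $\mathbb{Q}$-codegree is $\mu^F(P)=(\sup\{s>0 : P^{F(s)}\neq\emptyset\})^{-1}$. A $d$-dimensional lattice polytope $P$ is a lattice pyramid over a lattice polytope $P'\subseteq\mathbb{R}^{d-1}$ if $P$ is unimodularly equivalent to $\operatorname{conv}(P'\times\{1\},\{0\})\subseteq\mathbb{R}^{d-1}\times\mathbb{R}$. For $d\ge2$, a $d$-dimensional lattice polytope is an exceptional simplex if it is (up to unimodular equivalence) a $(d-2)$-fold iterated lattice pyramid over $2\Delta_2=\operatorname{conv}\{(0,0),(2,0),(0,2)\}$. *)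

(* Defs.v *)
From HB Require Import structures.
From mathcomp Require Import all_boot all_order all_algebra.
From mathcomp Require Import classical_sets reals.
Set Implicit Arguments. Unset Strict Implicit. Unset Printing Implicit Defensive.
Import Order.TTheory GRing.Theory Num.Theory.
Local Open Scope ring_scope.
Local Open Scope classical_set_scope.

Section Defs.
Variable R : realType.

Definition intv {d : nat} (a : 'rV[int]_d) : 'rV[R]_d := map_mx (fun z : int => z%:~R) a.
Definition intm {d : nat} (U : 'M[int]_d) : 'M[R]_d := map_mx (fun z : int => z%:~R) U.

Definition dotp {d : nat} (a x : 'rV[R]_d) : R := \sum_(i < d) a 0 i * x 0 i.

(* h_P(a) = min_{x in P} <a,x>  (an infimum, attained for polytopes) *)
Definition hP {d : nat} (P : set 'rV[R]_d) (a : 'rV[int]_d) : R :=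
  inf [set dotp (intv a) x | x in P].

Definition fine_adjoint {d : nat} (P : set 'rV[R]_d) (s : R) : set 'rV[R]_d :=
  [set x | forall a : 'rV[int]_d, a != 0 -> hP P a + s <= dotp (intv a) x].

Definition muF {d : nat} (P : set 'rV[R]_d) : R :=
  (sup [set s : R | 0 < s /\ fine_adjoint P s !=set0])^-1.

Definition conv {d : nat} (A : set 'rV[R]_d) : set 'rV[R]_d :=
  [set x | exists (n : nat) (v : 'I_n -> 'rV[R]_d) (w : 'I_n -> R),
     (forall i, A (v i)) /\ (forall i, 0 <= w i) /\ \sum_(i < n) w i = 1 /\
     x = \sum_(i < n) w i *: v i].

(* lattice pyramid conv(P' x {1}, {0}); the new coordinate is put first,
   which differs from the paper's convention only by a unimodular map *)
Definition pyramid {k : nat} (P' : set 'rV[R]_k) : set 'rV[R]_(1 + k) :=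
  conv ([set row_mx (const_mx 1 : 'rV[R]_1) y | y in P'] `|` [set 0]).

Definition two_Delta2 : set 'rV[R]_2 :=
  conv [set 0; \row_(i < 2) (if (i : nat) == 0%N then 2 else 0);
               \row_(i < 2) (if (i : nat) == 0%N then 0 else 2)].

Fixpoint iter_pyramid (n : nat) : set 'rV[R]_(n.+2) :=
  match n with
  | 0 => two_Delta2
  | n'.+1 => @pyramid n'.+2 (@iter_pyramid n')
  end.

Definition unimod_equiv {d : nat} (P Q : set 'rV[R]_d) : Prop :=
  exists (U : 'M[int]_d) (b : 'rV[int]_d),
    U \in unitmx /\ P = [set x *m intm U + intv b | x in Q].

Definition exceptional_simplex (n : nat) (P : set 'rV[R]_(n.+2)) : Prop :=
  unimod_equiv P (@iter_pyramid n).

End Defs.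

(* Main.v *)
Require Import Defs.
From HB Require Import structures.
From mathcomp Require Import all_boot all_order all_algebra.
From mathcomp Require Import classical_sets reals.
From mathcomp Require Import zify ring lra.
Import Order.TTheory GRing.Theory Num.Theory.
Local Open Scope ring_scope.
Set Implicit Arguments. Unset Strict Implicit. Unset Printing Implicit Defensive.

Section S.
Variable R : realType.

Lemma dotpE d (a x : 'rV[R]_d) : dotp a x = (a *m x^T) 0 0.
Proof. by rewrite /dotp mxE; apply: eq_bigr => i _; rewrite mxE. Qed.

Lemma dotp_mulmx d (a x : 'rV[R]_d) (M : 'M[R]_d) :
  dotp a (x *m M) = dotp (a *m M^T) x.
Proof. by rewrite !dotpE trmx_mul mulmxA. Qed.

Lemma dotpDr d (a x y : 'rV[R]_d) : dotp a (x + y) = dotp a x + dotp a y.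
Proof. by rewrite /dotp -big_split; apply: eq_bigr => i _; rewrite mxE mulrDr. Qed.

Lemma dotpDl d (a b x : 'rV[R]_d) : dotp (a + b) x = dotp a x + dotp b x.
Proof. by rewrite /dotp -big_split; apply: eq_bigr => i _; rewrite mxE mulrDl. Qed.

Lemma dotpNl d (a x : 'rV[R]_d) : dotp (- a) x = - dotp a x.
Proof. by rewrite /dotp -sumrN; apply: eq_bigr => i _; rewrite mxE mulNr. Qed.

Lemma dotpZr d (a x : 'rV[R]_d) c : dotp a (c *: x) = c * dotp a x.
Proof. by rewrite /dotp mulr_sumr; apply: eq_bigr => i _; rewrite mxE mulrCA. Qed.

Lemma dotp0r d (a : 'rV[R]_d) : dotp a 0 = 0.
Proof. by rewrite /dotp big1 // => i _; rewrite mxE mulr0. Qed.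

Lemma dotp_sumr d (a : 'rV[R]_d) m (F : 'I_m -> 'rV[R]_d) :
  dotp a (\sum_(i < m) F i) = \sum_(i < m) dotp a (F i).
Proof.
elim: m F => [|m IH] F; first by rewrite !big_ord0 dotp0r.
by rewrite !big_ord_recr /= dotpDr IH.
Qed.

Lemma dotp_row_mx k (a1 x1 : 'rV[R]_1) (a x : 'rV[R]_k) :
  dotp (row_mx a1 a) (row_mx x1 x) = a1 0 0 * x1 0 0 + dotp a x.
Proof.
rewrite /dotp big_split_ord /= big_ord1; congr (_ + _).
  by rewrite !row_mxEl.
by apply: eq_bigr => i _; rewrite !row_mxEr.
Qed.

Lemma conv_half d (A : set 'rV[R]_d) (g : 'rV[R]_d) c x :
  (forall y, A y -> c <= dotp g y) -> conv A x -> c <= dotp g x.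
Proof.
move=> HA [m [v [w [Av [w0 [w1 ->]]]]]].
rewrite dotp_sumr.
have -> : c = \sum_(i < m) w i * c by rewrite -mulr_suml w1 mul1r.
by apply: ler_sum => i _; rewrite dotpZr ler_wpM2l ?HA.
Qed.

Lemma conv_in d (A : set 'rV[R]_d) x : A x -> conv A x.
Proof.
move=> Ax; exists 1%N, (fun _ => x), (fun _ => 1).
split=> //; split=> [i|]; first by rewrite ler01.
by rewrite !big_ord1 scale1r.
Qed.


Definition Wg (T : ringType) (n k : nat) : 'rV[T]_(n.+2) :=
  \row_(i < n.+2) (if (k <= n)%N then (if (i < k)%N then 1 else 0)
     else if k == n.+1 then (if (i < n)%N then 1 else if i == n :> nat then 2%:R else 0)
     else (if (i < n)%N then 1 else if i == n.+1 :> nat then 2%:R else 0)).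

Definition W n k := Wg R n k.

Lemma W0 n : W n 0 = 0.
Proof. by apply/rowP => i; rewrite !mxE. Qed.

Lemma W_succ n k :
  row_mx (const_mx 1 : 'rV[R]_1) (W n k) = W n.+1 k.+1.
Proof.
apply/rowP => j; rewrite !mxE; case: splitP => [j1 /= ->|j2 /= ->].
  by rewrite mxE ord1 /=; case: ifP => //; case: ifP.
rewrite mxE !ltnS eqSS /= !add1n ?ltnS ?eqSS.
by repeat case: ifP.
Qed.

Lemma iterP_W n k : (k <= n.+2)%N -> @iter_pyramid R n (W n k).
Proof.
elim: n k => [|n IH] k hk.
  apply: conv_in; rewrite /W /Wg.
  case: k hk => [|[|[|]]] // _.
  - by left; left; apply/rowP => i; rewrite !mxE.
  - by left; right; apply/rowP => i; rewrite !mxE; case: i => [[|[|]]].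
  - by right; apply/rowP => i; rewrite !mxE; case: i => [[|[|]]].
apply: conv_in.
case: k hk => [|k] hk; first by right; rewrite W0.
left; exists (W n k); first exact: IH.
exact: W_succ.
Qed.

Lemma iterP_half n (g : 'rV[R]_(n.+2)) c q :
  (forall k, (k <= n.+2)%N -> c <= dotp g (W n k)) ->
  @iter_pyramid R n q -> c <= dotp g q.
Proof.
elim: n g c q => [|n IH] g c q Hk.
  apply: conv_half => y [[->|->]|->].
  - by have := Hk 0%N isT; rewrite W0.
  - suff -> : (\row_(i<2) (if (i:nat) == 0%N then 2 else 0) : 'rV[R]_2) = W 0 1 by apply: Hk.
    by apply/rowP => i; rewrite !mxE; case: i => [[|[|]]].
  - suff -> : (\row_(i<2) (if (i:nat) == 0%N then 0 else 2) : 'rV[R]_2) = W 0 2 by apply: Hk.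
    by apply/rowP => i; rewrite !mxE; case: i => [[|[|]]].
apply: conv_half => y [[y' Qy' <-]|->]; last by have := Hk 0%N isT; rewrite W0.
rewrite -[g](@hsubmxK _ 1 1 n.+2) dotp_row_mx [const_mx 1 0 0]mxE mulr1 -lerBlDl.
apply: IH Qy' => k hk.
rewrite lerBlDl.
have := Hk k.+1 hk; rewrite -W_succ.
rewrite -[g in dotp g _](@hsubmxK _ 1 1 n.+2) dotp_row_mx [const_mx 1 0 0]mxE mulr1.
by apply.
Qed.


Lemma argmin_nat (F : nat -> R) N :
  exists k, (k <= N)%N /\ forall j, (j <= N)%N -> F k <= F j.
Proof.
elim: N => [|N [k [hk Hk]]]; first by exists 0%N; split=> // j; rewrite leqn0 => /eqP ->.
have [le|lt] := leP (F k) (F N.+1).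
  exists k; split; first by apply: leqW.
  move=> j; rewrite leq_eqVlt => /orP [/eqP ->|] //; rewrite ltnS; exact: Hk.
exists N.+1; split=> // j; rewrite leq_eqVlt => /orP [/eqP ->|] //; rewrite ltnS => hj.
by apply: le_trans (ltW lt) (Hk _ hj).
Qed.

Lemma inf_min (E : set R) m : E m -> (forall e, E e -> m <= e) -> inf E = m.
Proof.
move=> Em lb; apply/le_anti/andP; split.
  by apply: ge_inf => //; exists m.
by apply: lb_le_inf => //; exists m.
Qed.

Lemma hQ_min n (f : 'rV[int]_(n.+2)) : exists k, (k <= n.+2)%N /\
  hP (@iter_pyramid R n) f = dotp (intv R f) (W n k) /\
  forall q, @iter_pyramid R n q -> dotp (intv R f) (W n k) <= dotp (intv R f) q.
Proof.
have [k [hk Hk]] := argmin_nat (fun k => dotp (intv R f) (W n k)) n.+2.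
have lb : forall q, @iter_pyramid R n q -> dotp (intv R f) (W n k) <= dotp (intv R f) q.
  by move=> q Qq; apply: iterP_half Qq.
exists k; split=> //; split=> //.
apply: inf_min; first by exists (W n k) => //; apply: iterP_W.
by move=> e [q Qq <-]; apply: lb.
Qed.

Definition vz n (a : 'rV[int]_(n.+2)) k : int := \sum_i a 0 i * Wg int n k 0 i.

Lemma dotp_intv_W n (a : 'rV[int]_(n.+2)) k : dotp (intv R a) (W n k) = (vz a k)%:~R.
Proof.
rewrite /dotp /vz rmorph_sum; apply: eq_bigr => i _.
rewrite rmorphM [intv R a 0 i]mxE; congr (_ * _).
by rewrite /W /Wg !mxE; repeat case: ifP => _; rewrite ?rmorph0 ?rmorph1 ?rmorph_nat.
Qed.

Lemma sum_delta m (F : 'I_m.+1 -> int) j : (j < m.+1)%N ->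
  (forall i : 'I_m.+1, (i : nat) != j -> F i = 0) -> \sum_i F i = F (inord j).
Proof.
move=> hj H; rewrite (bigD1 (inord j)) //= big1 ?addr0 // => i /eqP ne.
apply: H; apply/eqP => ej; apply: ne; apply: val_inj; rewrite /= inordK //.
Qed.

Lemma vz0 n (a : 'rV[int]_(n.+2)) : vz a 0 = 0.
Proof. by rewrite /vz big1 // => i _; rewrite mxE /= mulr0. Qed.

Lemma vz_diff n (a : 'rV[int]_(n.+2)) k j c :
  (j < n.+2)%N ->
  (forall i : 'I_n.+2, Wg int n k 0 i - Wg int n j 0 i = if i == c :> nat then 1 else 0) ->
  (c < n.+2)%N ->
  vz a k - vz a j = a 0 (inord c).
Proof.
move=> _ H hc; rewrite /vz -sumrB (@sum_delta n.+1 _ c) // => [|i ne].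
  by rewrite -mulrBr H inordK // eqxx mulr1.
by rewrite -mulrBr H (negbTE ne) mulr0.
Qed.


Lemma vz_diffE n (a : 'rV[int]_(n.+2)) k j c e :
  (forall i : 'I_n.+2, Wg int n k 0 i - Wg int n j 0 i = if i == c :> nat then e else 0) ->
  (c < n.+2)%N ->
  vz a k - vz a j = a 0 (inord c) * e.
Proof.
move=> H hc; rewrite /vz -sumrB (@sum_delta n.+1 _ c) // => [|i ne].
  by rewrite -mulrBr H inordK // eqxx.
by rewrite -mulrBr H (negbTE ne) mulr0.
Qed.

Ltac wcase := move=> i; rewrite !mxE; repeat case: ifP; move=> *; lia.

Lemma vz_succ n (a : 'rV[int]_(n.+2)) k : (k < n)%N -> vz a k.+1 - vz a k = a 0 (inord k).
Proof.
move=> hk; rewrite -[RHS]mulr1; apply: vz_diffE; last by lia.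
wcase.
Qed.

Lemma vz_n1 n (a : 'rV[int]_(n.+2)) : vz a n.+1 - vz a n = a 0 (inord n) * 2.
Proof. by apply: vz_diffE; [wcase|lia]. Qed.

Lemma vz_n2 n (a : 'rV[int]_(n.+2)) : vz a n.+2 - vz a n = a 0 (inord n.+1) * 2.
Proof. by apply: vz_diffE; [wcase|lia]. Qed.


Lemma split3 (T : nmodType) (G : nat -> T) n :
  \sum_(k < n.+3) G k = \sum_(i < n) G i + G n + G n.+1 + G n.+2.
Proof. by rewrite !big_ord_recr. Qed.

Definition s0 n : R := 2 / (2 * n%:R + 3).
Definition lam n (k : nat) : R := if (k < n)%N then s0 n else s0 n / 2.
Definition x0 n : 'rV[R]_(n.+2) := \sum_(k < n.+3) lam n k *: W n k.

Lemma s0_gt0 n : 0 < s0 n.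
Proof. rewrite /s0 divr_gt0 //; have := ler0n R n; lra. Qed.

Lemma sum_lam n : \sum_(k < n.+3) lam n k = 1.
Proof.
rewrite (split3 (lam n)) (eq_bigr (fun _ => s0 n)) => [|i _]; last by rewrite /lam ltn_ord.
rewrite sumr_const card_ord /lam ltnn !ltnNge leqnSn (leqW (leqnSn n)) /= -mulr_natr /s0.
have h : 2 * n%:R + 3 != 0 :> R by apply/negP => /eqP E; have := ler0n R n; lra.
by field.
Qed.


Lemma key_int n (a : 'rV[int]_(n.+2)) m :
  a != 0 -> (forall k, (k <= n.+2)%N -> m <= vz a k) ->
  2 <= 2 * (\sum_(i < n) (vz a i - m)) + (vz a n - m) + (vz a n.+1 - m) + (vz a n.+2 - m).
Proof.
move=> a0 Hm.
have h1 := vz_n1 a; have h2 := vz_n2 a.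
have hn := Hm n (leqW (leqnSn n)); have hn1 := Hm n.+1 (leqnSn _); have hn2 := Hm n.+2 (leqnn _).
have D0 : 0 <= \sum_(i < n) (vz a i - m).
  by apply: sumr_ge0 => i _; rewrite subr_ge0; apply: Hm; have := ltn_ord i; lia.
have [D1|D1] := lerP 1 (\sum_(i < n) (vz a i - m)); first by lia.
have Dz : \sum_(i < n) (vz a i - m) = 0 by lia.
have Heq : forall i, (i < n)%N -> vz a i = m.
  move=> i hi; move/eqP: Dz; rewrite psumr_eq0 => [/allP H|j _]; last by rewrite subr_ge0; apply: Hm; have := ltn_ord j; lia.
  have := H (Ordinal hi) (mem_index_enum _); rewrite /= subr_eq0 => /eqP //.
rewrite leNgt; apply/negP => lt2.
have [e1 [e2 e3]] : vz a n = m /\ a 0 (inord n) = 0 /\ a 0 (inord n.+1) = 0 by lia.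
have m0 : m = 0.
  have [n0|npos] := posnP n; last by rewrite -(Heq 0%N) // vz0.
  have vz0' : forall k, k = 0%N -> vz a k = 0 by move=> k ->; exact: vz0.
  by rewrite -e1 (vz0' n n0).
move/eqP: a0; apply; apply/rowP => i; rewrite mxE -(inord_val i).
have : (i < n.+2)%N := ltn_ord i.
have [lt|ge] := ltnP i n.
  rewrite -(vz_succ a lt) (Heq i) // => _.
  have [lt1|ge1] := ltnP i.+1 n; first by rewrite Heq // subrr.
  have -> : i.+1 = n by lia.
  by rewrite e1 subrr.
move=> hi.
have [->|ne] := eqVneq (i : nat) n; first by [].
have -> : (i : nat) = n.+1 by lia.
by [].
Qed.


Lemma x0_fine n : fine_adjoint (@iter_pyramid R n) (s0 n) (x0 n).
Proof.
move=> a a0.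
have [k [hk [-> lb]]] := hQ_min a.
rewrite /x0 dotp_sumr.
under eq_bigr do rewrite dotpZr dotp_intv_W.
rewrite dotp_intv_W.
set m := vz a k.
have Hm : forall j, (j <= n.+2)%N -> m <= vz a j.
  move=> j hj; rewrite -(ler_int R) -!dotp_intv_W; apply: lb; exact: iterP_W.
have K := key_int a0 Hm.
set T2 := (X in 2 <= X) in K.
have E : \sum_(k < n.+3) lam n k * (vz a k)%:~R = m%:~R + s0 n / 2 * T2%:~R.
  have -> : \sum_(k < n.+3) lam n k * (vz a k)%:~R =
            \sum_(k < n.+3) lam n k * ((vz a k)%:~R - m%:~R) + m%:~R.
    rewrite -[X in _ = _ + X]mul1r -(sum_lam n) mulr_suml -big_split /=.
    by apply: eq_bigr => i _; rewrite mulrBr subrK.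
  rewrite (split3 (fun k => lam n k * ((vz a k)%:~R - m%:~R))).
  rewrite (eq_bigr (fun i : 'I_n => s0 n * ((vz a i)%:~R - m%:~R))) => [|i _]; last by rewrite /lam ltn_ord.
  have HS : ((\sum_(i < n) (vz a i - m))%:~R : R) = \sum_(i < n) ((vz a i)%:~R - m%:~R).
    by rewrite rmorph_sum; apply: eq_bigr => i _; rewrite rmorphB.
  rewrite /T2 !rmorphD /= rmorphM /= HS !rmorphN /=.
  rewrite /lam ltnn !ltnNge leqnSn (leqW (leqnSn n)) /= -mulr_sumr.
  rewrite (_ : (2%:~R : R) = 2) //.
  set S := \sum_(i < n) _.
  move: (s0 n) S ((vz a n)%:~R : R) ((vz a n.+1)%:~R : R) ((vz a n.+2)%:~R : R) (m%:~R : R) => u S p q r t.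
  by field.
rewrite E.
have T2r : (2 : R) <= T2%:~R by rewrite (_ : (2 : R) = 2%:~R) // ler_int.
have := s0_gt0 n; nra.
Qed.


Definition ei d (j : nat) : 'rV[int]_d := \row_(i < d) (if i == j :> nat then 1 else 0).

Lemma intvD d (a b : 'rV[int]_d) : intv R (a + b) = intv R a + intv R b.
Proof. by apply/rowP => i; rewrite !mxE rmorphD. Qed.
Lemma intvN d (a : 'rV[int]_d) : intv R (- a) = - intv R a.
Proof. by apply/rowP => i; rewrite !mxE rmorphN. Qed.

Lemma dotp_ei n j (x : 'rV[R]_(n.+2)) : (j < n.+2)%N ->
  dotp (intv R (ei n.+2 j)) x = x 0 (inord j).
Proof.
move=> hj; rewrite /dotp (bigD1 (inord j)) //= big1 => [|i /eqP ne].
  by rewrite !mxE inordK // eqxx mul1r addr0.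
rewrite !mxE; case: ifP => [/eqP e|]; last by rewrite mul0r.
by exfalso; apply: ne; apply: val_inj; rewrite /= inordK.
Qed.

Lemma Wentry n k j : (j < n.+2)%N -> W n k 0 (inord j) =
  (if (k <= n)%N then (if (j < k)%N then 1 else 0)
     else if k == n.+1 then (if (j < n)%N then 1 else if j == n then 2%:R else 0)
     else (if (j < n)%N then 1 else if j == n.+1 then 2%:R else 0)).
Proof. by move=> hj; rewrite /W /Wg mxE inordK. Qed.

Lemma hQ_ge n (g : 'rV[int]_(n.+2)) c :
  (forall k, (k <= n.+2)%N -> c <= dotp (intv R g) (W n k)) ->
  c <= hP (@iter_pyramid R n) g.
Proof. by move=> H; have [k [hk [-> _]]] := hQ_min g; apply: H. Qed.

Ltac wsplit := rewrite /=; match goal with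
  | |- context [if ?c then _ else _] => let E := fresh "E" in case E: c; first [exfalso; lia | wsplit]
  | _ => first [lra | exfalso; lia] end.

Lemma W_mono n k c : (c.+1 < n)%N ->
  W n k 0 (inord c.+1) <= W n k 0 (inord c).
Proof. move=> hc; rewrite !Wentry; try lia. wsplit. Qed.

Lemma W_ge0 n k c : (c < n.+2)%N -> 0 <= W n k 0 (inord c).
Proof. move=> hc; rewrite !Wentry //. wsplit. Qed.

Lemma W_first n k : (0 < n)%N -> W n k 0 (inord 0) <= 1.
Proof. move=> hn; rewrite !Wentry; try lia. wsplit. Qed.

Lemma W_last n k : 0 <= 2 * W n.+1 k 0 (inord n) - W n.+1 k 0 (inord n.+1) - W n.+1 k 0 (inord n.+2).
Proof. rewrite !Wentry; try lia. wsplit. Qed.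

Lemma W_zero k : W 0 k 0 (inord 0) + W 0 k 0 (inord 1) <= 2.
Proof. rewrite !Wentry //. wsplit. Qed.

Lemma ub_Q n z s : fine_adjoint (@iter_pyramid R n) s z -> s <= s0 n.
Proof.
move=> F.
have Fe : forall g, g != 0 -> hP (@iter_pyramid R n) g + s <= dotp (intv R g) z by [].
have nz1 : forall j, (j < n.+2)%N -> ei n.+2 j != 0.
  move=> j hj; apply/eqP => /rowP /(_ (inord j)); rewrite !mxE inordK // eqxx => /eqP; lia.
have hn : (n < n.+2)%N by lia.
have hn1 : (n.+1 < n.+2)%N by lia.
have Hn : 0 <= hP (@iter_pyramid R n) (ei n.+2 n).
  by apply: hQ_ge => k hk; rewrite dotp_ei // W_ge0.
have Hn1 : 0 <= hP (@iter_pyramid R n) (ei n.+2 n.+1).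
  by apply: hQ_ge => k hk; rewrite dotp_ei // W_ge0.
have zn := Fe _ (nz1 n hn); rewrite dotp_ei // in zn.
have zn1 := Fe _ (nz1 n.+1 hn1); rewrite dotp_ei // in zn1.
have n0 : 0 <= n%:R :> R := ler0n R n.
rewrite /s0 ler_pdivlMr; last by lra.
case: n z F Fe nz1 hn hn1 Hn Hn1 zn zn1 n0 => [|n] z F Fe nz1 hn hn1 Hn Hn1 zn zn1 n0.
  set g := - ei 2 0 - ei 2 1.
  have gnz : g != 0.
    by apply/eqP => /rowP /(_ (inord 0)); rewrite !mxE inordK //= => /eqP.
  have Hg : -2 <= hP (@iter_pyramid R 0) g.
    apply: hQ_ge => k hk; rewrite /g !intvD !intvN !dotpDl !dotpNl !dotp_ei //.
    have := W_zero k; lra.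
  have := Fe _ gnz; rewrite /g !intvD !intvN !dotpDl !dotpNl !dotp_ei //.
  lra.
have g0nz : - ei n.+3 0 != 0 by rewrite oppr_eq0; apply: nz1.
have H0 : -1 <= hP (@iter_pyramid R n.+1) (- ei n.+3 0).
  apply: hQ_ge => k hk; rewrite !intvN !dotpNl !dotp_ei //.
  have := @W_first n.+1 k isT; lra.
have z0 := Fe _ g0nz; rewrite intvN dotpNl dotp_ei // in z0.
have chain : forall k, (k < n.+1)%N -> z 0 (inord k) <= 1 - (k%:R + 1) * s.
  elim=> [|k IH] hk; first by lra.
  have IH' := IH (ltnW hk).
  have hk1 : (k < n.+3)%N by lia.
  have hk2 : (k.+1 < n.+3)%N by lia.
  have gnz : ei n.+3 k - ei n.+3 k.+1 != 0.
    apply/eqP => /rowP /(_ (inord k)); rewrite !mxE inordK // eqxx.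
    by rewrite (_ : (k == k.+1) = false) ?subr0 //; apply/negbTE; rewrite neq_ltn ltnSn.
  have Hg : 0 <= hP (@iter_pyramid R n.+1) (ei n.+3 k - ei n.+3 k.+1).
    apply: hQ_ge => j hj; rewrite intvD intvN dotpDl dotpNl !dotp_ei //.
    have := W_mono j hk; lra.
  have := Fe _ gnz; rewrite intvD intvN dotpDl dotpNl !dotp_ei //.
  rewrite -natr1; lra.
have zc := chain n (leqnn _).
have hn2 : (n < n.+3)%N by lia.
set g := ei n.+3 n + ei n.+3 n - ei n.+3 n.+1 - ei n.+3 n.+2.
have gnz : g != 0.
  apply/eqP => /rowP /(_ (inord n)); rewrite !mxE inordK // eqxx.
  rewrite (_ : (n == n.+1) = false); last by apply/negbTE; rewrite neq_ltn ltnSn.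
  rewrite (_ : (n == n.+2) = false); last by apply/negbTE; rewrite neq_ltn ltnW.
  by [].
have Hg : 0 <= hP (@iter_pyramid R n.+1) g.
  apply: hQ_ge => j hj; rewrite /g !intvD !intvN !dotpDl !dotpNl !dotp_ei //.
  have := W_last n j; lra.
have := Fe _ gnz; rewrite /g !intvD !intvN !dotpDl !dotpNl !dotp_ei //.
rewrite -natr1; nra.
Qed.


Lemma intvM d (A : 'rV[int]_d) (B : 'M[int]_d) : intv R (A *m B) = intv R A *m intm R B.
Proof. by rewrite /intv /intm map_mxM. Qed.
Lemma intm_tr d (A : 'M[int]_d) : intm R A^T = (intm R A)^T.
Proof. by rewrite /intm map_trmx. Qed.
Lemma intmM d (A B : 'M[int]_d) : intm R (A *m B) = intm R A *m intm R B.
Proof. by rewrite /intm map_mxM. Qed.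
Lemma intm1 d : intm R (1%:M : 'M[int]_d) = 1%:M.
Proof. by rewrite /intm map_mx1. Qed.

Lemma dot_transfer d (a : 'rV[int]_d) (U : 'M[int]_d) b x :
  dotp (intv R a) (x *m intm R U + intv R b) =
  dotp (intv R (a *m U^T)) x + dotp (intv R a) (intv R b).
Proof. by rewrite dotpDr dotp_mulmx intvM intm_tr. Qed.

Lemma hP_transfer n (U : 'M[int]_(n.+2)) b a :
  hP [set x *m intm R U + intv R b | x in @iter_pyramid R n] a =
  hP (@iter_pyramid R n) (a *m U^T) + dotp (intv R a) (intv R b).
Proof.
have [k [hk [-> lb]]] := hQ_min (a *m U^T).
apply: inf_min.
  exists (W n k *m intm R U + intv R b); last by rewrite dot_transfer.
  by exists (W n k) => //; apply: iterP_W.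
move=> e [y [x Qx <-] <-]; rewrite dot_transfer lerD2r; exact: lb.
Qed.

Local Open Scope classical_set_scope.

Theorem main_aux n (P : set 'rV[R]_(n.+2)) :
  @exceptional_simplex R n P -> muF P = (n.+2)%:R - 2^-1.
Proof.
move=> [U [b [Uu ->]]].
have UUi : U *m invmx U = 1%:M by rewrite mulmxV.
have UiU : invmx U *m U = 1%:M by rewrite mulVmx.
set Ui := invmx U in UUi UiU.
have fa : forall f : 'rV[int]_(n.+2), f *m Ui^T *m U^T = f.
  by move=> f; rewrite -mulmxA -trmx_mul UUi trmx1 mulmx1.
have af : forall a : 'rV[int]_(n.+2), a *m U^T *m Ui^T = a.
  by move=> a; rewrite -mulmxA -trmx_mul UiU trmx1 mulmx1.
rewrite /muF; set S := (X in (sup X)^-1).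
have ub : forall s, S s -> s <= s0 n.
  move=> s [s_gt0 [y Fy]].
  apply: (@ub_Q n ((y - intv R b) *m intm R Ui)) => f f0.
  have a0 : f *m Ui^T != 0.
    by apply: contraNneq f0 => e; rewrite -(fa f) e mul0mx.
  have := Fy _ a0; rewrite hP_transfer fa.
  have Ey : y = (y - intv R b) *m intm R Ui *m intm R U + intv R b.
    by rewrite -mulmxA -intmM UiU intm1 mulmx1 subrK.
  rewrite {1}Ey dot_transfer fa; lra.
have s0S : S (s0 n).
  split; first exact: s0_gt0.
  exists (x0 n *m intm R U + intv R b) => a a0.
  have f0 : a *m U^T != 0 by apply: contraNneq a0 => e; rewrite -(af a) e mul0mx.
  rewrite hP_transfer dot_transfer -addrAC lerD2r.
  exact: x0_fine.
have supS : sup S = s0 n.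
  apply/le_anti/andP; split.
    by apply: ge_sup; [exists (s0 n) | exact: ub].
  by apply: ub_le_sup => //; exists (s0 n) => s; exact: ub.
rewrite supS /s0 invf_div !mulrS.
by field.
Qed.

End S.

Unset Implicit Arguments.
Set Strict Implicit.

Theorem mainTheorem9 (R : realType) (n : nat) (P : set 'rV[R]_(n.+2)) :
  exceptional_simplex P -> muF P = (n.+2)%:R - 2^-1.
Proof. exact: main_aux. Qed.
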